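(* Every barrier $B$ contains an end-closed subbarrier, i.e. there is a barrier $B'\subseteq B$ which is end-closed.
   Context: Finite subsets of $\mathbb{N}$ are identified with their increasing enumerations. A barrier is an infinite set $B$ of finite subsets of $\mathbb{N}$, no member of which is a proper subset of another, such that every infinite $X\subseteq\bigcup B$ has a nonempty initial segment (in its increasing enumeration) belonging to $B$. For a finite sequence $s$, $s_*$ denotes $s$ with its last element removed, and $B_*=\{s_*: s\in B\}$. For $s$ a finite increasing sequence and $a$ greater than all elements of $s$, $s\cdot(a)$ is the sequence obtained by appending $a$. A barrier $B$ is end-closed if $s\cdot(a)\in B$ for every $s\in B_*$ and every $a\in\bigcup B$ greater than all elements of $s$. *)

(* Defs.v *)
From mathcomp Require Import all_boot.
Set Implicit Arguments. Unset Strict Implicit. Unset Printing Implicit Defensive.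

(* A finite subset of nat is represented by its increasing enumeration:
   a sequence sorted by the strict order ltn. A family of finite subsets is
   a predicate on seq nat. *)
Definition increasing (s : seq nat) : Prop := sorted ltn s.

Definition infinite_fam (T : eqType) (P : T -> Prop) : Prop :=
  forall l : seq T, exists x, P x /\ x \notin l.

Definition bigU (B : seq nat -> Prop) (x : nat) : Prop :=
  exists2 s, B s & x \in s.

Definition init_seg (X : nat -> Prop) (s : seq nat) : Prop :=
  [/\ s != [::], increasing s, (forall x, x \in s -> X x) &
      forall x, X x -> x <= last 0 s -> x \in s].

Definition barrier (B : seq nat -> Prop) : Prop :=
  [/\ (forall s, B s -> increasing s),
      infinite_fam B,
      (forall s t, B s -> B t -> {subset s <= t} -> s = t) &
      (forall X : nat -> Prop, (forall x, X x -> bigU B x) -> infinite_fam X ->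
         exists s, init_seg X s /\ B s)].

Definition drop_last (s : seq nat) : seq nat := take (size s).-1 s.

Definition Bstar (B : seq nat -> Prop) (t : seq nat) : Prop :=
  exists2 s, B s & t = drop_last s.

Definition end_closed (B : seq nat -> Prop) : Prop :=
  forall s a, Bstar B s -> bigU B a -> (forall x, x \in s -> x < a) ->
    B (rcons s a).

(* Main.v *)
Require Import Defs.
From mathcomp Require Import all_boot.
From Stdlib Require ClassicalEpsilon Classical.

Set Implicit Arguments. Unset Strict Implicit. Unset Printing Implicit Defensive.

Definition unb (Y : nat -> Prop) := forall n, exists x, n <= x /\ Y x.

Definition Pinf (B : seq nat -> Prop) s (Y : nat -> Prop) :=
  unb (fun a => Y a /\ B (rcons s a)).

Definition refine (B : seq nat -> Prop) s (Y : nat -> Prop) : nat -> Prop :=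
  fun a => Y a /\ ((Pinf B s Y /\ B (rcons s a)) \/ (~ Pinf B s Y /\ ~ B (rcons s a))).

Lemma refine_unb B s Y : unb Y -> unb (refine B s Y).
Proof.
move=> hY.
case: (Classical_Prop.classic (Pinf B s Y)) => hP.
  move=> n; have [x [hx [h1 h2]]] := hP n.
  by exists x; split=> //; split=> //; left.
have [n0 hn0] := Classical_Pred_Type.not_all_ex_not _ _ hP.
move=> n; have [x [hx hYx]] := hY (maxn n n0).
exists x; split; first by apply: leq_trans hx; rewrite leq_maxl.
split=> //; right; split=> // hB; apply: hn0; exists x; split=> //.
by apply: leq_trans hx; rewrite leq_maxr.
Qed.

Fixpoint refs (B : seq nat -> Prop) (L : seq (seq nat)) (Y : nat -> Prop) :=
  match L with [::] => Y | s :: L' => refine B s (refs B L' Y) end.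

Lemma refs_unb B L Y : unb Y -> unb (refs B L Y).
Proof. by elim: L => //= s L IH hY; apply: refine_unb; apply: IH. Qed.

Lemma refs_sub B L Y x : refs B L Y x -> Y x.
Proof. by elim: L x => //= s L IH x [/IH]. Qed.

Lemma refs_hom B L Y s a b : s \in L -> refs B L Y a -> refs B L Y b ->
  B (rcons s a) -> B (rcons s b).
Proof.
elim: L => //= s' L IH; rewrite in_cons; case/orP.
  move/eqP=> -> [_ ha] [_ hb] hB.
  case: ha => [] [hP h]; last by [].
  by case: hb => [] [].
by move=> hs [ha _] [hb _]; apply: IH.
Qed.

Fixpoint subs (s : seq nat) : seq (seq nat) :=
  match s with [::] => [:: [::]] | x :: s' => subs s' ++ map (cons x) (subs s') end.

Lemma nil_subs s : [::] \in subs s.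
Proof. by elim: s => //= x s IH; rewrite mem_cat IH. Qed.

Lemma in_subs s t : pairwise ltn s -> pairwise ltn t -> {subset t <= s} -> t \in subs s.
Proof.
elim: s t => [|x s IH] t.
  by case: t => // y t _ _ /(_ y); rewrite mem_head => /(_ isT).
rewrite pairwise_cons => /andP [/allP hx hs].
case: t => [|y t]; first by move=> *; apply: nil_subs.
rewrite pairwise_cons => /andP [/allP hy ht] hsub /=.
rewrite mem_cat; case: (eqVneq y x) => [eyx | nyx].
  subst y; apply/orP; right; apply: map_f; apply: IH => // z hz.
  have := hsub z; rewrite in_cons hz orbT => /(_ isT); rewrite in_cons.
  case/orP=> // /eqP ezx; subst z; have := hy x hz; rewrite /= => h; exfalso; by move: h; rewrite ltnn.
apply/orP; left; apply: IH; first by [].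
  by rewrite pairwise_cons; apply/andP; split=> //; apply/allP.
have yin : y \in s.
  by have := hsub y (mem_head _ _); rewrite in_cons (negbTE nyx).
have xy := hx y yin.
move=> z; rewrite in_cons => /orP [/eqP -> // | hz].
have := hsub z; rewrite in_cons hz orbT => /(_ isT); rewrite in_cons.
case/orP=> // /eqP ezx; subst z; have h : y < x := hy x hz.
by rewrite ltnNge (ltnW xy) in h.
Qed.

Definition pick (Z : nat -> Prop) : nat := ClassicalEpsilon.epsilon (inhabits 0) Z.

Fixpoint st (B : seq nat -> Prop) (k : nat) : seq nat * (nat -> Prop) :=
  match k with
  | 0 => ([::], Defs.bigU B)
  | k'.+1 => let p := st B k' in
             let Z := refs B (subs p.1) p.2 in
             let m := pick Z in
             (rcons p.1 m, fun x => Z x /\ m < x)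
  end.

Definition Zst B k := refs B (subs (st B k).1) (st B k).2.

Lemma pick_spec Z : unb Z -> Z (pick Z).
Proof.
move=> h; apply: ClassicalEpsilon.epsilon_spec.
by have [x [_ hx]] := h 0; exists x.
Qed.

Lemma iota_pw m n : pairwise ltn (iota m n).
Proof.
rewrite -sorted_pairwise; last exact: ltn_trans.
exact: iota_ltn_sorted.
Qed.

Lemma U_unb B : barrier B -> unb (Defs.bigU B).
Proof.
case=> hinc hinf _ _ n.
have [s [hBs hsn]] := hinf (subs (iota 0 n)).
have : ~~ all (fun x => x < n) s.
  apply: contra hsn => /allP hall; apply: in_subs; first exact: iota_pw.
    by rewrite -sorted_pairwise; [exact: hinc | exact: ltn_trans].
  by move=> x hx; rewrite mem_iota add0n /=; apply: hall.
case/allPn=> x hx; rewrite -leqNgt => hnx.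
by exists x; split=> //; exists s.
Qed.

Lemma st_inv B k : barrier B ->
  unb (st B k).2 /\ (forall y, (st B k).2 y -> Defs.bigU B y) /\
 (forall x, x \in (st B k).1 -> Defs.bigU B x) /\ pairwise ltn (st B k).1 /\
 (forall x y, x \in (st B k).1 -> (st B k).2 y -> x < y) /\
 (forall y, (st B k).2 y -> k <= y).
Proof.
move=> hb.
elim: k => [|k [h1 [h2 [h3 [h4 [h5 h6]]]]]].
  by do ! split=> //; apply: U_unb.
have hZ : unb (Zst B k) by apply: refs_unb.
have hm := pick_spec hZ.
have hmY : (st B k).2 (pick (Zst B k)) := refs_sub hm.
rewrite /=; split; [|split; [|split; [|split; [|split]]]].
- move=> n; have [x [hx hZx]] := hZ (maxn n (pick (Zst B k)).+1).
  exists x; split; last split=> //.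
  + by apply: leq_trans hx; rewrite leq_maxl.
  + by apply: leq_trans hx; rewrite leq_maxr.
- by move=> y [/refs_sub /h2].
- move=> x; rewrite -cats1 mem_cat => /orP [/h3 // | ]; rewrite inE => /eqP ->.
  exact: h2.
- rewrite -cats1 pairwise_cat h4 /=; apply/andP; split=> //.
  by apply/allrelP => x y hx; rewrite inE => /eqP ->; apply: h5.
- move=> x y; rewrite -cats1 mem_cat => /orP [hx | ]; last first.
    by rewrite inE => /eqP -> [].
  move=> [/refs_sub hy _]; exact: h5.
- move=> y [/refs_sub hy hlt]; apply: leq_ltn_trans hlt; exact: h6.
Qed.

Lemma grow B k d : barrier B -> exists r, (st B (k + d)).1 = (st B k).1 ++ r /\
  (forall x, x \in r -> (st B k).2 x) /\ (forall y, (st B (k + d)).2 y -> (st B k).2 y).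
Proof.
move=> hb; elim: d => [|d [r [e [hr hY]]]].
  by exists [::]; rewrite addn0 cats0.
have [h1 _] := st_inv (k + d) hb.
have hm := pick_spec (refs_unb B (subs (st B (k + d)).1) h1).
exists (rcons r (pick (Zst B (k + d)))); rewrite addnS /=; split.
  by rewrite -rcons_cat -e.
split.
  move=> x; rewrite -cats1 mem_cat => /orP [/hr // |]; rewrite inE => /eqP ->.
  by apply: hY; apply: refs_sub hm.
by move=> y [/refs_sub /hY].
Qed.

Lemma growZ B k K : barrier B -> k < K -> exists r, (st B K).1 = (st B k).1 ++ r /\
  (forall x, x \in r -> Zst B k x).
Proof.
move=> hb hk; have [r [e [hr _]]] := grow k.+1 (K - k.+1) hb.
rewrite subnKC // in e.
exists (pick (Zst B k) :: r); split; first by rewrite e /= -cats1 -catA.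
have [h1 _] := st_inv k hb.
have hm := pick_spec (refs_unb B (subs (st B k).1) h1).
move=> x; rewrite inE => /orP [/eqP -> // | /hr []] //.
Qed.

Lemma mem_mono B k K x : barrier B -> k <= K -> x \in (st B k).1 -> x \in (st B K).1.
Proof.
move=> hb hk hx; have [r [e _]] := grow k (K - k) hb.
by rewrite subnKC // in e; rewrite e mem_cat hx.
Qed.

Definition Mset B x := exists k, x \in (st B k).1.

Lemma collect B (t : seq nat) : barrier B -> (forall x, x \in t -> Mset B x) ->
  exists K, {subset t <= (st B K).1}.
Proof.
move=> hb; elim: t => [|a t IH] h; first by exists 0.
have [K hK] := IH (fun x hx => h x (mem_behead (s := a :: t) hx)).
have [k hk] := h a (mem_head _ _).
exists (maxn K k) => x; rewrite inE => /orP [/eqP -> | hx].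
  by apply: mem_mono hk => //; rewrite leq_maxr.
by apply: mem_mono (hK x hx) => //; rewrite leq_maxl.
Qed.

Lemma find_stage B K (s : seq nat) : barrier B -> {subset s <= (st B K).1} ->
  exists k, k <= K /\ {subset s <= (st B k).1} /\
    forall x, x \in (st B k).1 -> exists2 y, y \in s & x <= y.
Proof.
move=> hb; elim: K => [|K IH] hs.
  by exists 0; split=> //; split=> // x.
have [hsK | ] := boolP (all (fun x => x \in (st B K).1) s).
  have [k [hk h]] := IH (fun x hx => (allP hsK) x hx).
  by exists k; split=> //; apply: leqW.
case/allPn=> z hz hzn.
exists K.+1; split=> //; split=> //.
have hzm : z = pick (Zst B K).
  by have := hs z hz; rewrite /= -cats1 mem_cat (negbTE hzn) inE => /eqP.
move=> x; rewrite /= -cats1 mem_cat => /orP [hx | ]; last first.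
  by rewrite inE => /eqP ->; exists z; rewrite // hzm.
exists z => //; apply: ltnW.
have [_ [_ [_ [_ [h5 _]]]]] := st_inv K hb.
apply: h5 => //; rewrite hzm; apply: refs_sub; apply: pick_spec.
by apply: refs_unb; have [] := st_inv K hb.
Qed.

Lemma fold_max (l : seq nat) x : x \in l -> x <= foldr maxn 0 l.
Proof.
elim: l => //= a l IH; rewrite inE => /orP [/eqP -> | /IH h].
  by rewrite leq_maxl.
by rewrite leq_max h orbT.
Qed.

Lemma unb_inf (P : nat -> Prop) : (forall n, exists x, P x /\ n <= x) -> infinite_fam P.
Proof.
move=> h l; have [x [hx hn]] := h (foldr maxn 0 l).+1.
exists x; split=> //; apply/negP => /fold_max hl.
by have := leq_trans hn hl; rewrite ltnn.
Qed.

Lemma M_unb B n : barrier B -> exists x, Mset B x /\ n <= x.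
Proof.
move=> hb; have [h1 [_ [_ [_ [_ h6]]]]] := st_inv n hb.
have hm := pick_spec (refs_unb B (subs (st B n).1) h1).
exists (pick (Zst B n)); split.
  by exists n.+1; rewrite /= mem_rcons mem_head.
exact: h6 (refs_sub hm).
Qed.

Lemma M_U B x : barrier B -> Mset B x -> Defs.bigU B x.
Proof.
move=> hb [k hk]; have [_ [_ [h3 _]]] := st_inv k hb; exact: h3.
Qed.

Lemma B_nonempty B s : barrier B -> B s -> s <> [::].
Proof.
case=> _ hinf hanti _ hs es; subst s.
have [x [hx hn]] := hinf [:: [::]].
have := hanti _ _ hs hx (fun y (hy : y \in [::]) => ltac:(by [])).
by move=> e; move: hn; rewrite -e mem_head.
Qed.

Lemma rcons_pw (s : seq nat) c : increasing (rcons s c) ->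
  pairwise ltn s /\ forall x, x \in s -> x < c.
Proof.
rewrite /increasing sorted_pairwise; last exact: ltn_trans.
rewrite -cats1 pairwise_cat => /and3P [/allrelP ha hs _]; split=> // x hx.
by apply: ha => //; rewrite mem_head.
Qed.

Lemma drop_last_rcons (s : seq nat) c : drop_last (rcons s c) = s.
Proof. by rewrite /drop_last size_rcons /= -cats1 take_size_cat. Qed.

Theorem lemma2p10 (B : seq nat -> Prop) :
  barrier B ->
  exists B' : seq nat -> Prop,
    (forall s, B' s -> B s) /\ barrier B' /\ end_closed B'.
Proof.
move=> hb.
exists (fun u => B u /\ forall x, x \in u -> Mset B x).
split; first by move=> s [].
have hb' := hb; case: hb' => hinc hinf hanti hbar.
split.
  split.
  - by move=> s [/hinc].
  - move=> l; set N := (foldr maxn 0 (flatten l)).+1.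
    have hXU : forall x, Mset B x /\ N <= x -> Defs.bigU B x.
      by move=> x [hx _]; apply: M_U.
    have hXI : infinite_fam (fun x => Mset B x /\ N <= x).
      apply: unb_inf => n; have [x [hx hn]] := M_unb (maxn n N) hb.
      exists x; split; first split=> //.
        by apply: leq_trans hn; rewrite leq_maxr.
      by apply: leq_trans hn; rewrite leq_maxl.
    have [s [[hne _ hin _] hBs]] := hbar _ hXU hXI.
    exists s; split; first by split=> // x /hin [].
    apply/negP => hsl; case: s hne hin {hBs} hsl => // x0 s _ hin hsl.
    have [_ hN] := hin x0 (mem_head _ _).
    have : x0 \in flatten l by apply/flattenP; exists (x0 :: s) => //; rewrite mem_head.
    move/fold_max => h; by have := leq_trans hN h; rewrite ltnn.
  - by move=> s t [hs _] [ht _]; apply: hanti.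
  - move=> X hX hXi.
    have hXU : forall x, X x -> Defs.bigU B x.
      by move=> x /hX [u [hu _] hxu]; exists u.
    have [s [hseg hBs]] := hbar X hXU hXi.
    exists s; split=> //; split=> // x hx.
    case: hseg => _ _ hin _.
    by have [u [_ hu] hxu] := hX x (hin x hx); apply: hu.
move=> s a [t [hBt hMt] ->] [u [_ hMu] hau] hlt.
have hMa := hMu a hau.
have := B_nonempty hb hBt; case/lastP: t hBt hMt hlt => // s0 c hBt hMt hlt _.
rewrite drop_last_rcons in hlt *.
have [hs0 hc] := rcons_pw (hinc _ hBt).
have [K hK] := collect (t := a :: rcons s0 c) hb
  ltac:(move=> x; rewrite inE => /orP [/eqP -> // | ]; exact: hMt).
have hs0K : {subset s0 <= (st B K).1}.
  by move=> x hx; apply: hK; rewrite inE mem_rcons inE hx !orbT.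
have [k [hkK [hs0k hk]]] := find_stage hb hs0K.
have notin : forall z, (forall x, x \in s0 -> x < z) -> z \notin (st B k).1.
  move=> z hz; apply/negP => /hk [y hy hzy].
  by have := leq_trans (hz y hy) hzy; rewrite ltnn.
have hcK : c \in (st B K).1 by apply: hK; rewrite inE mem_rcons mem_head orbT.
have haK : a \in (st B K).1 by apply: hK; rewrite mem_head.
have hkK' : k < K.
  rewrite ltn_neqAle hkK andbT; apply/eqP => ekK; subst k.
  by move: (notin c hc); rewrite hcK.
have [r [er hr]] := growZ hb hkK'.
have hcr : c \in r.
  by move: hcK; rewrite er mem_cat (negbTE (notin c hc)).
have har : a \in r.
  by move: haK; rewrite er mem_cat (negbTE (notin a hlt)).
have [_ [_ [_ [h4 _]]]] := st_inv k hb.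
have hsub : s0 \in subs (st B k).1 by apply: in_subs.
split.
  exact: refs_hom hsub (hr c hcr) (hr a har) hBt.
move=> x; rewrite mem_rcons inE => /orP [/eqP -> // | hx].
by apply: hMt; rewrite mem_rcons inE hx orbT.
Qed.
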